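(* Let $d$ be a metric on $\mathbb R^n$ induced by a norm, $\delta>0$, and let $\tilde w:\mathcal D^n(\delta)\to\mathcal D^n(\delta)$ be the $\delta$-roundoff of a contraction $w$ on $(\mathbb R^n,d)$ with contractivity factor $\lambda\in[0,1)$ and fixed point $x_f$. Then the minimal absorbing set $\mathcal M[\tilde w]$ (for $\tilde w$ in $\mathcal D^n(\delta)$) exists, is finite, and its cardinality is at most the cardinality of $\Lambda(x_f,r_0)=\{\tilde y\in\mathcal D^n(\delta):d(\tilde y,x_f)\le\theta(1-\lambda)^{-1}\}$.
   Context: For $m\in\mathbb Z^n$, $C_\delta(m)=\prod_{j=1}^n[(m_j-\tfrac12)\delta,(m_j+\tfrac12)\delta)$; $\mathcal D^n(\delta)=\{\delta m:m\in\mathbb Z^n\}\subset\mathbb R^n$. The $\delta$-roundoff of $x\in\mathbb R^n$ is $\tilde x=\delta m$ where $x\in C_\delta(m)$; the $\delta$-roundoff of $w$ is $\tilde w(\tilde x)=\widetilde{w(\tilde x)}$. $\theta:=\tfrac12\operatorname{diam}_d(C_\delta(0))$. For nonempty $C$ with $\tilde w(C)\subset C$, $\Lambda\subset C$ is absorbing for $\tilde w$ in $C$ if for every $\tilde x\in C$ there is $N$ with $\tilde w^{\circ i}(\tilde x)\in\Lambda$ for all $i\ge N$. If the intersection of all absorbing sets in $C=\mathcal D^n(\delta)$ is itself absorbing, it is the minimal absorbing set $\mathcal M[\tilde w]$ and is said to exist. *)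

(* Defs.v *)
From HB Require Import structures.
From mathcomp Require Import all_boot all_order all_algebra.
From mathcomp Require Import all_classical all_reals.
Set Implicit Arguments. Unset Strict Implicit. Unset Printing Implicit Defensive.
Import Order.TTheory GRing.Theory Num.Theory.
Local Open Scope ring_scope.
Local Open Scope classical_set_scope.

Section Defs.
Variables (R : realType) (n : nat).

Definition is_norm (N : 'rV[R]_n -> R) : Prop :=
  [/\ (forall x, 0 <= N x),
      (forall x, N x = 0 -> x = 0),
      (forall (a : R) x, N (a *: x) = `|a| * N x) &
      (forall x y, N (x + y) <= N x + N y)].

Definition ndist (N : 'rV[R]_n -> R) (x y : 'rV[R]_n) : R := N (x - y).

Definition cube (delta : R) (m : 'rV[int]_n) : set 'rV[R]_n :=
  [set x | forall j, ((m ord0 j)%:~R - 2^-1) * delta <= x ord0 j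
                  /\ x ord0 j < ((m ord0 j)%:~R + 2^-1) * delta].

Definition grid (delta : R) (m : 'rV[int]_n) : 'rV[R]_n :=
  delta *: map_mx (fun k : int => k%:~R) m.

Definition Dgrid (delta : R) : set 'rV[R]_n := range (grid delta).

(* delta-roundoff: x~ = delta m where x in C_delta(m), i.e.
   m_j = floor (x_j / delta + 1/2) *)
Definition roundoff (delta : R) (x : 'rV[R]_n) : 'rV[R]_n :=
  grid delta (map_mx (fun t => Num.floor (t / delta + 2^-1)) x).

Definition roundoff_map (delta : R) (w : 'rV[R]_n -> 'rV[R]_n) :=
  fun x => roundoff delta (w x).

Definition theta (N : 'rV[R]_n -> R) (delta : R) : R :=
  2^-1 * sup [set ndist N x y | x in cube delta 0 & y in cube delta 0].

Definition absorbing (f : 'rV[R]_n -> 'rV[R]_n) (C L : set 'rV[R]_n) : Prop :=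
  L `<=` C /\
  forall x, C x -> exists N : nat, forall i : nat, (N <= i)%N -> L (iter i f x).

Definition absorbing_inter (f : 'rV[R]_n -> 'rV[R]_n) (C : set 'rV[R]_n) :=
  \bigcap_(L in [set L | absorbing f C L]) L.

End Defs.

(* Main.v *)
Require Import Defs.
From HB Require Import structures.
From mathcomp Require Import all_boot all_order all_algebra.
From mathcomp Require Import all_classical all_reals all_analysis.
From mathcomp Require Import zify ring lra.
Import Order.TTheory GRing.Theory Num.Theory.
Import numFieldNormedType.Exports.
Local Open Scope ring_scope.
Local Open Scope classical_set_scope.
Set Implicit Arguments. Unset Strict Implicit. Unset Printing Implicit Defensive.
Lemma norm0 (R : realType) n (N : 'rV[R]_n -> R) : is_norm N -> N 0 = 0.
Proof.
case=> _ _ hZ _; have := hZ 0 0; rewrite scale0r normr0 mul0r; exact.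
Qed.

Lemma normN (R : realType) n (N : 'rV[R]_n -> R) : is_norm N -> forall x, N (- x) = N x.
Proof.
case=> _ _ hZ _ x; rewrite -scaleN1r hZ normrN normr1 mul1r //.
Qed.

Lemma normB (R : realType) n (N : 'rV[R]_n -> R) : is_norm N -> forall x y, N (x - y) = N (y - x).
Proof. by move=> hN x y; rewrite -(normN hN) opprB. Qed.

Lemma norm_sum (R : realType) n (N : 'rV[R]_n -> R) : is_norm N ->
  forall (I : Type) (r : seq I) (P : pred I) (F : I -> 'rV[R]_n),
  N (\sum_(j <- r | P j) F j) <= \sum_(j <- r | P j) N (F j).
Proof.
move=> hN I r P F; elim: r => [|a r IH]; first by rewrite !big_nil (norm0 hN).
rewrite !big_cons; case: (P a) => //; case: hN => _ _ _ hT.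
by apply: le_trans (hT _ _) _; rewrite lerD2l.
Qed.

Lemma coord_le (R : realType) n (x : 'rV[R]_n) j : `|x ord0 j| <= `|x|.
Proof.
have /mapP[k Hk ->] : `|x ord0 j| \in [seq `|x y.1 y.2| | y : 'I_1 * 'I_n].
  by apply/mapP; exists (ord0, j) => //=; rewrite mem_enum.
by rewrite [leRHS]/Num.norm /= mx_normrE; apply/bigmax_geP; right => /=; exists k.
Qed.

Definition nC (R : realType) n (N : 'rV[R]_n -> R) := \sum_(j < n) N 'e_j.

Lemma norm_ub (R : realType) n (N : 'rV[R]_n -> R) : is_norm N ->
  forall x, N x <= nC N * `|x|.
Proof.
move=> hN x; rewrite {1}(row_sum_delta x).
apply: le_trans (norm_sum hN (index_enum _) xpredT (fun j => x 0 j *: 'e_j)) _.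
rewrite /nC mulr_suml; apply: ler_sum => j _.
case: hN => h0 _ hZ _; rewrite hZ mulrC ler_wpM2l //.
exact: coord_le.
Qed.

Lemma nC_ge0 (R : realType) n (N : 'rV[R]_n -> R) : is_norm N -> 0 <= nC N.
Proof. by case=> h0 _ _ _; apply: sumr_ge0 => j _. Qed.

Lemma norm_lip (R : realType) n (N : 'rV[R]_n -> R) : is_norm N ->
  forall x y, `|N x - N y| <= nC N * `|x - y|.
Proof.
move=> hN x y; apply: le_trans (norm_ub hN (x - y)).
have hT := (let: And4 _ _ _ h := hN in h).
rewrite ler_norml; apply/andP; split.
  rewrite lerBrDl -lerBrDr opprK (normB hN).
  by have := hT (y - x) x; rewrite subrK addrC.
by rewrite lerBlDr; have := hT (x - y) y; rewrite subrK addrC.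
Qed.

Lemma norm_cont (R : realType) n (N : 'rV[R]_n -> R) : is_norm N -> continuous N.
Proof.
move=> hN x; apply/(@cvgrPdist_lt R R^o _ (nbhs x) _) => e e0; apply/(@nbhs_normP R 'rV[R]_n).
exists (e / (nC N + 1)) => /=.
  by rewrite divr_gt0 // ltr_pwDr // nC_ge0.
move=> y /= hy.
apply: le_lt_trans (norm_lip hN x y) _.
have hC : 0 < nC N + 1 by rewrite ltr_pwDr // nC_ge0.
rewrite -(ltr_pM2l hC) in hy.
rewrite mulrCA mulfV ?gt_eqF // mulr1 in hy.
apply: le_lt_trans hy; rewrite ler_wpM2r // ?lerDl //.
Qed.

Lemma norm_lb (R : realType) n (N : 'rV[R]_n -> R) : is_norm N ->
  exists2 c, 0 < c & forall x, c * `|x| <= N x.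
Proof.
move=> hN; have [hN0 hNd hZ hT] := hN.
pose S := [set x : 'rV[R]_n | `|x| = 1].
have unit x : x != 0 -> S (`|x|^-1 *: x).
  move=> x0; rewrite /S /= normrZ normfV normr_id mulVf //.
  by rewrite normr_eq0.
have hx x c : x != 0 -> (forall y, S y -> c <= N y) -> c * `|x| <= N x.
  move=> x0 hc; have := hc _ (unit x x0); rewrite hZ normfV normr_id.
  rewrite ler_pdivlMl; last by rewrite normr_gt0.
  by rewrite mulrC.
case: (pselect (S !=set0)) => [S0|S0].
- have cS : compact S.
    apply: bounded_closed_compact.
      exists 1; split; first by rewrite realE ler01.
      by move=> M M1 x Sx; rewrite /= Sx ltW.
    have -> : S = Num.norm @^-1` [set (1 : R)] by [].
    apply: preimage_closed; last exact: closed_eq.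
    by move=> x _; exact: norm_continuous.
  have [c0 c0S hmin] := EVT_min_rV S0 cS (continuous_subspaceT (norm_cont hN)).
  rewrite inE in c0S.
  exists (N c0).
    rewrite lt_def hN0 andbT; apply/eqP => /hNd c00.
    by move: c0S; rewrite /S /= c00 normr0 => /eqP; rewrite eq_sym oner_eq0.
  move=> x; have [->|x0] := eqVneq x 0; first by rewrite normr0 mulr0 hN0.
  by apply: hx => // y Sy; apply: hmin; rewrite inE.
- exists 1 => // x; have [->|x0] := eqVneq x 0; first by rewrite normr0 mulr0 hN0.
  by exfalso; apply: S0; exists (`|x|^-1 *: x); exact: unit.
Qed.

Lemma grid_ball_finite (R : realType) n (delta K : R) : 0 < delta ->
  finite_set [set y : 'rV[R]_n | Dgrid delta y /\ `|y| <= K].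
Proof.
move=> d0.
pose k := Num.bound (`|K| / delta).
have hk : `|K| / delta < k%:R by apply: archi_boundP; rewrite divr_ge0 // ltW.
pose f := fun g : {ffun 'I_n -> 'I_(k.*2)} =>
  grid delta (\row_j ((g j : nat)%:Z - k%:Z)).
apply: (sub_finite_set _ (finite_image f (@finite_finset _ setT))).
move=> y [[m _ <-] hy].
have hm j : (`|m ord0 j| < k)%N.
  have := le_trans (coord_le (grid delta m) j) hy.
  rewrite /grid !mxE normrM (gtr0_norm d0) => h.
  have h2 : `|(m ord0 j)%:~R : R| < k%:R.
    apply: le_lt_trans hk; rewrite ler_pdivlMr // mulrC.
    exact: le_trans h (ler_norm K).
  rewrite -intr_norm in h2.
  by rewrite -ltz_nat abszE -(ltr_int R).
have Hj j : (absz (m ord0 j + k%:Z)%R < k.*2)%N.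
  have := hm j; lia.
exists [ffun j => Ordinal (Hj j)] => //.
rewrite /f; congr grid; apply/matrixP => i j; rewrite !mxE ffunE /=.
rewrite (ord1 i) (_ : m 0 j = m ord0 j) //; have := hm j; lia.
Qed.

Lemma cube0P (R : realType) n (delta : R) (x : 'rV[R]_n) :
  cube delta 0 x <-> forall j, - (delta / 2) <= x ord0 j < delta / 2.
Proof.
rewrite /cube /=; split => h j; have := h j; rewrite mxE /= mulr0z.
- by case=> h1 h2; apply/andP; split; lra.
- by move/andP=> [h1 h2]; split; lra.
Qed.

Lemma roundoff_cube (R : realType) n (delta : R) (z : 'rV[R]_n) : 0 < delta ->
  cube delta 0 (z - roundoff delta z).
Proof.
move=> d0; apply/cube0P => j; rewrite /roundoff /grid !mxE.
set u := z ord0 j.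
have := floor_itv (u / delta + 2^-1); set f := Num.floor _.
move=> /andP[h1 h2]; rewrite intrD in h2.
have e : u = (u / delta) * delta by rewrite mulfVK ?gt_eqF.
rewrite e; set v := u / delta; set F : R := f%:~R.
rewrite -/F in h1 h2.
rewrite -/v (_ : (1%:~R : R) = 1) // in h2; rewrite -/v in h1.
have p1 : 0 <= delta * (v + 2^-1 - F) by apply: mulr_ge0; lra.
have p2 : 0 < delta * (F + 1 - (v + 2^-1)) by apply: mulr_gt0; lra.
apply/andP; split; lra.
Qed.

Lemma norm_ub2 (R : realType) n (N : 'rV[R]_n -> R) : is_norm N ->
  forall x, N x <= \sum_(j < n) `|x ord0 j| * N 'e_j.
Proof.
move=> hN x; rewrite {1}(row_sum_delta x).
apply: le_trans (norm_sum hN (index_enum _) xpredT (fun j => x 0 j *: 'e_j)) _.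
apply: ler_sum => j _.
by case: hN => h0 _ hZ _; rewrite hZ.
Qed.

Lemma cube_normb (R : realType) n (N : 'rV[R]_n -> R) (delta : R) : is_norm N ->
  0 < delta -> forall x, cube delta 0 x -> N x <= delta / 2 * nC N.
Proof.
move=> hN d0 x /cube0P hx; apply: le_trans (norm_ub2 hN x) _.
rewrite /nC mulr_sumr; apply: ler_sum => j _.
have [h0 _ _ _] := hN; apply: ler_wpM2r => //.
by have := hx j; rewrite ler_norml => /andP[h1 h2]; rewrite h1 ltW.
Qed.

Lemma theta_bound (R : realType) n (N : 'rV[R]_n -> R) (delta : R) : is_norm N ->
  0 < delta -> forall a, cube delta 0 a -> N a <= theta N delta.
Proof.
move=> hN d0 a ha; have [h0 _ hZ hT] := hN.
pose D := [set ndist N x y | x in cube delta 0 & y in cube delta 0].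
have D0 : cube delta 0 (0 : 'rV[R]_n) by apply/cube0P => j; rewrite mxE; apply/andP; split; lra.
have hD : has_sup D.
  split; first by exists (ndist N 0 0); exists 0 => //; exists 0.
  exists (delta * nC N) => _ [x hx [y hy <-]].
  rewrite /ndist; apply: le_trans (hT _ _) _; rewrite normN //.
  have := cube_normb hN d0 hx; have := cube_normb hN d0 hy; lra.
have th0 : 0 <= theta N delta.
  rewrite /theta; apply: mulr_ge0; first by rewrite invr_ge0.
  have Dx : D (ndist N 0 0) by exists 0 => //; exists 0.
  apply: le_trans (sup_upper_bound hD Dx); exact: h0.
have key t : 0 <= t -> t < 1 -> t * N a <= theta N delta.
  move=> t0 t1.
  have hc s : - 1 <= s <= 1 -> cube delta 0 ((s * t) *: a).
    move=> /andP[s1 s2]; apply/cube0P => j; rewrite mxE.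
    move/cube0P: ha => /(_ j) /andP[a1 a2].
    have hs : `|s * t| < 1.
      rewrite normrM (ger0_norm t0).
      have : `|s| <= 1 by rewrite ler_norml s1 s2.
      have := normr_ge0 s; nra.
    have ha' : `|a ord0 j| <= delta / 2 by rewrite ler_norml a1 ltW.
    have : `|s * t * a ord0 j| < delta / 2.
      rewrite normrM; have := normr_ge0 (s * t); have := normr_ge0 (a ord0 j); nra.
    by rewrite ltr_norml => /andP[b1 b2]; rewrite b2 ltW.
  have Dx : D (ndist N ((1 * t) *: a) ((-1 * t) *: a)).
    exists ((1 * t) *: a); first by apply: hc; lra.
    exists ((-1 * t) *: a) => //; by apply: hc; lra.
  have := sup_upper_bound hD Dx.
  rewrite /ndist -scalerBl hZ /theta.
  rewrite (_ : 1 * t - -1 * t = 2 * t); last by ring.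
  rewrite normrM (ger0_norm t0) normr_nat => h.
  have := h0 a; lra.
apply/negPn/negP; rewrite -ltNge => hlt.
have Na0 : 0 < N a by apply: le_lt_trans hlt.
have := key ((theta N delta + N a) / (2 * N a)).
rewrite (_ : (theta N delta + N a) / (2 * N a) * N a = (theta N delta + N a) / 2); last first.
  by field; rewrite gt_eqF.
have -> : (0 <= (theta N delta + N a) / (2 * N a)).
  by apply: divr_ge0; lra.
have -> : ((theta N delta + N a) / (2 * N a) < 1).
  by rewrite ltr_pdivrMr ?mul1r; lra.
move=> /(_ isT isT); lra.
Qed.

Unset Implicit Arguments.
Set Strict Implicit.
Set Printing Implicit Defensive.

Theorem corollary2 (R : realType) (n : nat) (N : 'rV[R]_n -> R)
  (delta lambda : R) (w : 'rV[R]_n -> 'rV[R]_n) (xf : 'rV[R]_n) :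
  is_norm N -> 0 < delta ->
  0 <= lambda -> lambda < 1 ->
  (forall x y, ndist N (w x) (w y) <= lambda * ndist N x y) ->
  w xf = xf ->
  let wt := roundoff_map delta w in
  let M := absorbing_inter wt (@Dgrid R n delta) in
  [/\ absorbing wt (@Dgrid R n delta) M,
      finite_set M &
      (M #<= [set y | @Dgrid R n delta y /\
                      ndist N y xf <= theta N delta / (1 - lambda)])%card].
Proof.
move=> hN d0 l0 l1 hcon hfix wt M.
have [hN0 hNd hZ hT] := hN.
set th := theta N delta; set r0 := th / (1 - lambda).
pose e y := ndist N y xf.
have hr0 : th + lambda * r0 = r0.
  rewrite /r0; field; lra.
have step y : e (wt y) <= th + lambda * e y.
  rewrite /e /ndist /wt /roundoff_map.
  have -> : roundoff delta (w y) - xf = (roundoff delta (w y) - w y) + (w y - w xf).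
    by rewrite hfix addrA subrK.
  apply: le_trans (hT _ _) _; apply: lerD.
    by rewrite normB //; apply: theta_bound => //; exact: roundoff_cube.
  exact: hcon.
have iter_b y k : e (iter k wt y) <= r0 + lambda ^+ k * (e y - r0).
  elim: k => [|k IH]; first by rewrite /= expr0 mul1r; lra.
  rewrite iterS; apply: le_trans (step _) _.
  rewrite exprS.
  have : lambda * e (iter k wt y) <= lambda * (r0 + lambda ^+ k * (e y - r0)).
    exact: ler_wpM2l.
  lra.
have ingrid y : Dgrid delta (wt y).
  by rewrite /wt /roundoff_map /roundoff; exists (map_mx (fun t => Num.floor (t / delta + 2^-1)) (w y)).
have iter_grid x k : Dgrid delta x -> Dgrid delta (iter k wt x).
  by case: k => [|k] //= _; exact: ingrid.
have [c c0 hc] := norm_lb hN.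
have finB B : finite_set [set y | Dgrid delta y /\ e y <= B].
  apply: sub_finite_set (grid_ball_finite n (B / c + `|xf|) d0).
  move=> y [gy ey]; split => //.
  have h1 : `|y - xf| <= B / c.
    rewrite ler_pdivlMr // mulrC; exact: le_trans (hc _) ey.
  have -> : y = (y - xf) + xf by rewrite subrK.
  by apply: le_trans (ler_normD _ _) _; rewrite lerD2r.
have pig x : Dgrid delta x -> exists i j, (i < j)%N /\ iter i wt x = iter j wt x.
  move=> gx; apply: contrapT => H.
  have inj : {in [set: nat] &, injective (fun k => iter k wt x)}.
    move=> i j _ _ /= eij; have [lt|lt|//] := ltngtP i j; exfalso; apply: H.
    - by exists i, j.
    - by exists j, i.
  have fin : finite_set ((fun k => iter k wt x) @` [set: nat]).
    apply: sub_finite_set (finB (r0 + `|e x - r0|)).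
    move=> _ [k _ <-]; split; first exact: iter_grid.
    apply: le_trans (iter_b x k) _; rewrite lerD2l.
    apply: le_trans (ler_norm _) _.
    rewrite normrM ger0_norm ?exprn_ge0 //.
    have : lambda ^+ k <= 1 by rewrite exprn_ile1 // ltW.
    have := normr_ge0 (e x - r0); have := exprn_ge0 k l0; nra.
  by apply: infinite_nat; rewrite -(eq_finite_set (inj_card_eq inj)).
pose Per := [set y | Dgrid delta y /\ exists p, (0 < p)%N /\ iter p wt y = y].
have iter_per y p m : iter p wt y = y -> iter (m * p) wt y = y.
  move=> hp; elim: m => [|m IH] //=.
  by rewrite mulSn iterD IH hp.
have Per_abs : absorbing wt (Dgrid delta) Per.
  split; first by move=> y [].
  move=> x gx; have [i [j [ij eij]]] := pig x gx.
  exists i => k ik; split; first exact: iter_grid.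
  exists (j - i)%N; split; first by rewrite subn_gt0.
  rewrite -iterD.
  have -> : (j - i + k = (k - i) + j)%N by lia.
  by rewrite iterD -eij -iterD subnK.
have Per_sub L : absorbing wt (Dgrid delta) L -> Per `<=` L.
  move=> [_ hL] y [gy [p [p0 hp]]].
  have [N0 hN0'] := hL y gy.
  rewrite -(iter_per y p N0 hp); apply: hN0'.
  by rewrite leq_pmulr.
have MPer : M = Per.
  apply/seteqP; split.
    by move=> y My; apply: My.
  by move=> y Py L hL; apply: Per_sub.
have PerL : Per `<=` [set y | Dgrid delta y /\ e y <= r0].
  move=> y [gy [p [p0 hp]]]; split => //.
  have := iter_b y p; rewrite hp.
  have : lambda ^+ p < 1 by rewrite exprn_ilt1 // -lt0n.
  have := exprn_ge0 p l0.
  move=> h1 h2 h3.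
  have : (1 - lambda ^+ p) * (e y - r0) <= 0 by lra.
  rewrite pmulr_rle0; last by lra.
  lra.
rewrite MPer; split => //.
- exact: sub_finite_set PerL (finB r0).
- exact: subset_card_le PerL.
Qed.
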